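(* Let $\mathbf X$ be a random variable with values in $\mathcal X$ and density $p(\mathbf x)$, and let $\mathcal A$ be a finite set. For Q-functions $Q_0,Q_1:\mathcal X\times\mathcal A\to(0,\infty)$ and a real number $\gamma\notin\{0,-1\}$ define $$H_\gamma(Q_0,Q_1)=-\frac1\gamma\,\mathbb E\Bigg[\frac{\sum_{a\in\mathcal A}Q_0(\mathbf X,a)\,Q_1(\mathbf X,a)^{\gamma}}{\big\{\sum_{a\in\mathcal A}Q_1(\mathbf X,a)^{1+\gamma}\big\}^{\frac{\gamma}{1+\gamma}}}\Bigg],\qquad D_\gamma(Q_0,Q_1)=H_\gamma(Q_0,Q_1)-H_\gamma(Q_0,Q_0),$$ assuming all these expectations are finite. Then $D_\gamma(Q_0,Q_1)\ge 0$, with equality if and only if $Q_0\sim Q_1$.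
   Context: A Q-function is a measurable function $Q:\mathcal X\times\mathcal A\to(0,\infty)$. Policy equivalence: $Q_0\sim Q_1$ means there exists a function $\eta:\mathcal X\to(0,\infty)$ such that $Q_1(\mathbf x,a)=\eta(\mathbf x)Q_0(\mathbf x,a)$ for all $a\in\mathcal A$ and (almost) every $\mathbf x\in\mathcal X$, where ''almost every'' is with respect to the distribution of $\mathbf X$. $\mathbb E$ is expectation with respect to $\mathbf X$. *)

(* Defs.v *)
From HB Require Import structures.
From mathcomp Require Import all_boot all_order all_algebra.
From mathcomp Require Import all_classical all_reals all_analysis.
Set Implicit Arguments. Unset Strict Implicit. Unset Printing Implicit Defensive.
Import Order.TTheory GRing.Theory Num.Theory.
Local Open Scope ring_scope.
Local Open Scope classical_set_scope.

Section Defs.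
Context (d : measure_display) (T : measurableType d) (R : realType) (A : finType).

Definition is_Qfun (Q : T -> A -> R) : Prop :=
  (forall a, measurable_fun setT (fun x => Q x a)) /\ (forall x a, 0 < Q x a).

Definition Hint (g : R) (Q0 Q1 : T -> A -> R) (x : T) : R :=
  (\sum_(a : A) Q0 x a * Q1 x a `^ g) /
  (\sum_(a : A) Q1 x a `^ (1 + g)) `^ (g / (1 + g)).

Definition Hgamma (P : probability T R) (g : R) (Q0 Q1 : T -> A -> R) : R :=
  - g^-1 * Rintegral P setT (Hint g Q0 Q1).

Definition Dgamma (P : probability T R) (g : R) (Q0 Q1 : T -> A -> R) : R :=
  Hgamma P g Q0 Q1 - Hgamma P g Q0 Q0.

Definition policy_equiv (P : probability T R) (Q0 Q1 : T -> A -> R) : Prop :=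
  exists eta : T -> R, (forall x, 0 < eta x) /\
    {ae P, forall x, forall a, Q1 x a = eta x * Q0 x a}.
End Defs.

(* Main.v *)
Require Import Defs.
From HB Require Import structures.
From mathcomp Require Import all_boot all_order all_algebra.
From mathcomp Require Import all_classical all_reals all_analysis.
From mathcomp Require Import ring lra.
Import Order.TTheory GRing.Theory Num.Theory.
Local Open Scope ring_scope.
Local Open Scope classical_set_scope.

Section Aux.
Variable R : realType.
Implicit Types a b m l p s g : R.

Lemma tangent a m : expR m * (1 + (a - m)) <= expR a.
Proof.
rewrite -[in X in _ <= X](subrK m a) expRD [X in _ <= X]mulrC ler_pM2l ?expR_gt0//.
exact: expR_ge1Dx.
Qed.

Lemma tangent_lt a m : a != m -> expR m * (1 + (a - m)) < expR a.
Proof.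
move=> am.
rewrite -[in X in _ < X](subrK m a) expRD [X in _ < X]mulrC ltr_pM2l ?expR_gt0//.
by apply: expR_gt1Dx; rewrite subr_eq0.
Qed.

Lemma cvx_key l a b E : E = l * (E * (1 + (a - (l*a+(1-l)*b)))) +
   (1-l) * (E * (1 + (b - (l*a+(1-l)*b)))).
Proof. ring. Qed.

Lemma cvx l a b : 0 < l < 1 ->
  expR (l*a + (1-l)*b) <= l * expR a + (1-l) * expR b.
Proof.
case/andP=> l0 l1.
rewrite {1}(cvx_key l a b (expR (l*a + (1-l)*b))).
apply: lerD; apply: ler_wpM2l; rewrite ?subr_ge0 ?(ltW l0) ?(ltW l1) //;
exact: tangent.
Qed.

Lemma cvx_lt l a b : 0 < l < 1 -> a != b ->
  expR (l*a + (1-l)*b) < l * expR a + (1-l) * expR b.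
Proof.
case/andP=> l0 l1 ab.
rewrite {1}(cvx_key l a b (expR (l*a + (1-l)*b))).
apply: ltr_leD.
  rewrite ltr_pM2l//; apply: tangent_lt.
  apply: contra ab => /eqP h.
  have e : (1 - l) * (a - b) = a - (l*a+(1-l)*b) by ring.
  have : (1 - l) * (a - b) == 0 by rewrite e -h subrr.
  rewrite mulf_eq0 subr_eq0 subr_eq0 => /orP[/eqP l1'|//].
  by rewrite l1' ltxx in l1.
by apply: ler_wpM2l; [rewrite subr_ge0 ltW|exact: tangent].
Qed.

Definition B p s := expR (p*s) - 1 - p * (expR s - 1).

Lemma bern_gt1 p s : 1 < p -> 0 <= B p s /\ (s != 0 -> 0 < B p s).
Proof.
move=> p1; have p0 : 0 < p by apply: lt_trans p1.
have l01 : 0 < p^-1 < 1 by rewrite invr_gt0 p0 /= invf_lt1.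
have arg : p^-1 * (p * s) + (1 - p^-1) * 0 = s by rewrite mulr0 addr0 mulrA mulVf ?gt_eqF// mul1r.
have key : p * (p^-1 * expR (p * s) + (1 - p^-1) * 1) = expR (p*s) + p - 1.
  by rewrite mulr1 mulrDr mulrA mulfV ?gt_eqF// mul1r mulrBr mulfV ?gt_eqF// mulr1 addrA.
have h := cvx p^-1 (p * s) 0 l01; rewrite arg expR0 in h.
split.
  have := ler_wpM2l (ltW p0) h; rewrite key /B; lra.
move=> s0; have := cvx_lt p^-1 (p*s) 0 l01.
rewrite arg expR0 mulf_eq0 negb_or gt_eqF//= => /(_ s0) h2.
have := h2; rewrite -(ltr_pM2l p0) key /B; lra.
Qed.

Lemma bern_01 p s : 0 < p < 1 -> B p s <= 0 /\ (s != 0 -> B p s < 0).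
Proof.
move=> l01.
have arg : p * s + (1 - p) * 0 = p * s by rewrite mulr0 addr0.
have h := cvx p s 0 l01; rewrite arg expR0 in h.
split; first by move: h; rewrite /B; lra.
move=> s0; have := cvx_lt p s 0 l01 s0.
rewrite arg expR0 /B; lra.
Qed.

Lemma bern_neg p s : p < 0 -> 0 <= B p s /\ (s != 0 -> 0 < B p s).
Proof.
move=> p0.
have q0 : 0 < 1 - p by lra.
have qn : 1 - p != 0 by rewrite gt_eqF.
have l01 : 0 < (1 - p)^-1 < 1.
  by rewrite invr_gt0 q0 /= invf_lt1 //; lra.
have arg : (1 - p)^-1 * (p * s) + (1 - (1 - p)^-1) * s = 0.
  by field.
have key : (1 - p) * ((1 - p)^-1 * expR (p * s) + (1 - (1 - p)^-1) * expR s)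
   = expR (p*s) - p * expR s.
  by field.
have h := cvx (1 - p)^-1 (p * s) s l01; rewrite arg expR0 in h.
split.
  have := ler_wpM2l (ltW q0) h; rewrite key /B; lra.
move=> s0; have := cvx_lt (1 - p)^-1 (p*s) s l01.
have ps : p * s != s.
  apply: contra s0 => /eqP e; have : (p - 1) * s == 0 by apply/eqP; rewrite mulrBl e mul1r subrr.
  rewrite mulf_eq0 subr_eq0 => /orP[/eqP p1|//]; move: p0; rewrite p1; lra.
rewrite arg expR0 => /(_ ps) h2.
have := h2; rewrite -(ltr_pM2l q0) key mulr1 /B; lra.
Qed.

Lemma bern g s : g != 0 -> g != -1 ->
  0 <= B (1 + g) s / (g * (1 + g)) /\ (B (1 + g) s = 0 -> s = 0).
Proof.
move=> g0 g1.
case: (ltgtP g 0) => [gn|gp|e]; last by rewrite e eqxx in g0.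
  case: (ltgtP g (-1)) => [gm|gm|e]; last by rewrite e eqxx in g1.
    have hh : 1 + g < 0 by lra.
    have [h1 h2] := bern_neg (1+g) s hh.
    split; first by rewrite divr_ge0 // nmulr_rge0 //; lra.
    move=> B0; apply/eqP/negPn/negP => /h2; rewrite B0 ltxx //.
  have hh : 0 < 1 + g < 1 by apply/andP; split; lra.
  have [h1 h2] := bern_01 (1+g) s hh.
  split; first by rewrite ler_ndivlMr ?mul0r // nmulr_rlt0 //; lra.
  move=> B0; apply/eqP/negPn/negP => /h2; rewrite B0 ltxx //.
have hh : 1 < 1 + g by lra.
have [h1 h2] := bern_gt1 (1+g) s hh.
split; first by rewrite divr_ge0 // mulr_ge0 //; lra.
move=> B0; apply/eqP/negPn/negP => /h2; rewrite B0 ltxx //.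
Qed.


End Aux.
Arguments B {R}.
Arguments bern {R} g s.

Section Pt.
Variable R : realType.
Variable A : finType.
Implicit Types (q : A -> R) (g x y e : R).

Definition hint g (q0 q1 : A -> R) :=
  (\sum_(a : A) q0 a * q1 a `^ g) / (\sum_(a : A) q1 a `^ (1 + g)) `^ (g / (1 + g)).

Definition Lq g q := ln (\sum_(a : A) expR ((1+g) * ln (q a))) / (1+g).

Definition posf q := forall a, 0 < q a.

Lemma powR_pos x y : 0 < x -> x `^ y = expR (y * ln x).
Proof. by move=> x0; rewrite /powR gt_eqF. Qed.
Local Opaque expR ln powR.

Lemma sum_pos (a0 : A) (F : A -> R) : (forall a, 0 < F a) -> 0 < \sum_(a : A) F a.
Proof.
move=> Fp; apply: (lt_le_trans (Fp a0)); rewrite (bigD1 a0) //= lerDl.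
by apply: sumr_ge0 => a _; exact: ltW.
Qed.

Lemma expLq (a0 : A) g q : 1 + g != 0 ->
  expR ((1+g) * Lq g q) = \sum_(a : A) expR ((1+g) * ln (q a)).
Proof.
move=> p0; rewrite /Lq mulrC divfK // lnK // posrE.
by apply: sum_pos => // a; exact: expR_gt0.
Qed.

Lemma sumw (a0 : A) g q : 1 + g != 0 ->
  \sum_(a : A) expR ((1+g) * (ln (q a) - Lq g q)) = 1.
Proof.
move=> p0.
under eq_bigr => a _ do rewrite mulrBr expRB.
rewrite -mulr_suml -(expLq a0 g q p0) mulfV // gt_eqF // expR_gt0 //.
Qed.

Lemma hint_rep (a0 : A) g q0 q1 : 1 + g != 0 -> posf q0 -> posf q1 ->
  hint g q0 q1 = \sum_(a : A) expR (ln (q0 a) + g * ln (q1 a) - g * Lq g q1).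
Proof.
move=> p0 h0 h1; rewrite /hint.
have E : forall a y, q1 a `^ y = expR (y * ln (q1 a)) by move=> a y; rewrite powR_pos.
rewrite [X in _ / X `^ _](eq_bigr (fun a => expR ((1+g) * ln (q1 a)))); last by move=> a _; rewrite E.
rewrite powR_pos; last by apply: sum_pos => // a; exact: expR_gt0.
have -> : g / (1 + g) * ln (\sum_(a : A) expR ((1+g) * ln (q1 a))) = g * Lq g q1.
  by rewrite /Lq; ring.
rewrite mulr_suml; apply: eq_bigr => a _.
have e0 : expR (ln (q0 a)) = q0 a by rewrite lnK // posrE.
by rewrite E -{1}e0 -expRN -!expRD.
Qed.

Lemma hint_empty g q0 q1 : (@predT A) =1 xpred0 -> hint g q0 q1 = 0.
Proof.
move=> A0; rewrite /hint big_pred0 ?mul0r // => a; by have := A0 a.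
Qed.

Lemma sum_lin (F1 F2 F3 : A -> R) c :
  \sum_(a : A) (F1 a - F2 a - c * F3 a + c * F2 a) =
  \sum_(a : A) F1 a - \sum_(a : A) F2 a - c * \sum_(a : A) F3 a + c * \sum_(a : A) F2 a.
Proof. by rewrite big_split /= !sumrB -!mulr_sumr. Qed.

Lemma lin_aux (x y z c : R) : x = 1 -> y = 1 ->
  x - y - c * z + c * y = 1 - 1 - c * z + c * 1.
Proof. by move=> -> ->. Qed.

Lemma expln x : 0 < x -> expR (ln x) = x.
Proof. by move=> x0; rewrite lnK // posrE. Qed.

Definition wf g q1 a := expR ((1+g) * (ln (q1 a) - Lq g q1)).
Definition sf g q0 q1 a := ln (q0 a) - Lq g q0 - (ln (q1 a) - Lq g q1).
Definition tf g q0 q1 a := wf g q1 a * (B (1+g) (sf g q0 q1 a) / (g * (1+g))).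
Definition Xf g q0 q1 a := expR (ln (q0 a) + g * ln (q1 a) - g * Lq g q1) * expR (- Lq g q0).

Lemma term_eq g q0 q1 a : tf g q0 q1 a =
    (wf g q0 a - wf g q1 a - (1+g) * Xf g q0 q1 a + (1+g) * wf g q1 a) / (g * (1+g)).
Proof.
have E1 : wf g q1 a * expR ((1+g) * sf g q0 q1 a) = wf g q0 a.
  by rewrite /wf -expRD; congr expR; rewrite /sf; ring.
have E2 : wf g q1 a * expR (sf g q0 q1 a) = Xf g q0 q1 a.
  by rewrite /wf /Xf -!expRD; congr expR; rewrite /sf; ring.
by rewrite /tf -E1 -E2 /B; ring.
Qed.

Lemma sumX (a0 : A) g q0 q1 : 1 + g != 0 -> posf q0 -> posf q1 ->
  \sum_(a : A) Xf g q0 q1 a = hint g q0 q1 * expR (- Lq g q0).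
Proof.
move=> p0 h0 h1; rewrite (hint_rep a0 g q0 q1 p0 h0 h1) mulr_suml; reflexivity.
Qed.

Lemma sumwf (a0 : A) g q : 1 + g != 0 -> \sum_(a : A) wf g q a = 1.
Proof. exact: sumw. Qed.

Local Opaque wf Xf.

Lemma sum_t (a0 : A) g q0 q1 : 1 + g != 0 -> posf q0 -> posf q1 ->
  \sum_(a : A) tf g q0 q1 a =
    (1 - 1 - (1+g) * (hint g q0 q1 * expR (- Lq g q0)) + (1+g) * 1) / (g * (1+g)).
Proof.
move=> p0 h0 h1.
rewrite (eq_bigr _ (fun a _ => term_eq g q0 q1 a)) -mulr_suml.
rewrite sum_lin (sumX a0 g q0 q1 p0 h0 h1).
rewrite [X in (X - _ - _ + _) / _](sumwf a0 g q0 p0).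
rewrite [X in (_ - X - _ + _) / _](sumwf a0 g q1 p0).
rewrite [X in (_ - _ - _ + _ * X) / _](sumwf a0 g q1 p0).
reflexivity.
Qed.

Lemma H00_eq (a0 : A) g q0 : 1 + g != 0 -> posf q0 -> hint g q0 q0 = expR (Lq g q0).
Proof.
move=> p0 h0; rewrite (hint_rep a0 g q0 q0 p0 h0 h0).
transitivity (\sum_(a : A) expR ((1+g) * ln (q0 a)) * expR (- (g * Lq g q0))).
  by apply: eq_bigr => a _; rewrite -expRD; congr expR; ring.
by rewrite -mulr_suml -(expLq a0 g q0 p0) -expRD; congr expR; ring.
Qed.

Lemma key_eq (a0 : A) g q0 q1 : g != 0 -> 1 + g != 0 -> posf q0 -> posf q1 ->
  g^-1 * (hint g q0 q0 - hint g q0 q1) = expR (Lq g q0) * \sum_(a : A) tf g q0 q1 a.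
Proof.
move=> g0 p0 h0 h1; rewrite (sum_t a0 g q0 q1 p0 h0 h1) (H00_eq a0 g q0 p0 h0) expRN.
have en : expR (Lq g q0) != 0 by rewrite gt_eqF ?expR_gt0.
field; by rewrite p0 g0 en.
Qed.

Lemma tf_ge0 g q0 q1 a : g != 0 -> g != -1 -> 0 <= tf g q0 q1 a.
Proof.
move=> g0 g1; apply: mulr_ge0; [exact: expR_ge0 | exact: (bern _ _ g0 g1).1].
Qed.

Lemma hint_point g q0 q1 : g != 0 -> g != -1 -> posf q0 -> posf q1 ->
  0 <= g^-1 * (hint g q0 q0 - hint g q0 q1) /\
  (hint g q0 q1 = hint g q0 q0 ->
     forall a, q1 a = expR (Lq g q1 - Lq g q0) * q0 a).
Proof.
move=> g0 g1 h0 h1.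
have p0 : 1 + g != 0 by apply: contra g1 => /eqP h; apply/eqP; lra.
case: (pickP (@predT A)) => [a0 _ | A0]; last first.
  rewrite !hint_empty //; split; first by rewrite subrr mulr0.
  by move=> _ a; have := A0 a.
have key := key_eq a0 g q0 q1 g0 p0 h0 h1.
split.
  rewrite key; apply: mulr_ge0; first exact: expR_ge0.
  by apply: sumr_ge0 => a _; exact: tf_ge0.
move=> eqH a.
have st0 : \sum_(a : A) tf g q0 q1 a = 0.
  apply: (mulfI (negbT (gt_eqF (expR_gt0 (Lq g q0))))).
  by rewrite mulr0 -key eqH subrr mulr0.
have ht := psumr_eq0P (fun a _ => tf_ge0 g q0 q1 a g0 g1) st0 (i := a) isT.
have wne : wf g q1 a != 0 := negbT (gt_eqF (expR_gt0 _)).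
have hb : B (1+g) (sf g q0 q1 a) / (g*(1+g)) = 0.
  by apply: (mulfI wne); rewrite mulr0; exact: ht.
move/eqP: hb; rewrite mulf_eq0 invr_eq0 mulf_eq0 (negbTE g0) (negbTE p0) !orbF.
move=> hB; have := (bern _ _ g0 g1).2 (eqP hB).
rewrite /sf => hs.
have e : ln (q1 a) = (Lq g q1 - Lq g q0) + ln (q0 a).
  by rewrite -[LHS]addr0 -hs; ring.
transitivity (expR (ln (q1 a))); first by rewrite (expln _ (h1 a)).
by rewrite e expRD (expln _ (h0 a)).
Qed.

Lemma Lq_scale (a0 : A) g q0 q1 e : 1 + g != 0 -> posf q0 -> 0 < e ->
  (forall a, q1 a = e * q0 a) -> Lq g q1 = ln e + Lq g q0.
Proof.
move=> p0 h0 e0 q1e.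
have lq1 : forall a, ln (q1 a) = ln e + ln (q0 a).
  by move=> a; rewrite q1e lnM // posrE.
rewrite /Lq (eq_bigr (fun a => expR ((1+g) * ln e) * expR ((1+g) * ln (q0 a))));
  last by move=> a _; rewrite lq1 mulrDr expRD.
rewrite -mulr_sumr lnM ?posrE ?expR_gt0 //; last by apply: sum_pos => // a; exact: expR_gt0.
by rewrite expRK; field.
Qed.

Local Opaque Lq hint.

Lemma hint_conv g q0 q1 e : 1 + g != 0 -> posf q0 -> 0 < e ->
  (forall a, q1 a = e * q0 a) -> hint g q0 q1 = hint g q0 q0.
Proof.
move=> p0 h0 e0 q1e.
case: (pickP (@predT A)) => [a0 _ | A0].
  have h1 : posf q1 by move=> a; rewrite q1e mulr_gt0.
  have lq1 : forall a, ln (q1 a) = ln e + ln (q0 a).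
    by move=> a; rewrite q1e lnM // posrE.
  have Lq1 := Lq_scale a0 g q0 q1 e p0 h0 e0 q1e.
  rewrite (hint_rep a0 g q0 q1 p0 h0 h1) (hint_rep a0 g q0 q0 p0 h0 h0).
  apply: eq_bigr => a _; congr expR; rewrite lq1 Lq1; ring.
by rewrite (hint_empty g q0 q1 A0) (hint_empty g q0 q0 A0).
Qed.

End Pt.

Lemma alg_aux (R : realType) (c a b : R) : - c * b - (- c * a) = c * (a - b).
Proof. by rewrite mulrBr !mulNr opprK addrC. Qed.

Theorem theorem1 (d : measure_display) (T : measurableType d) (R : realType)
  (A : finType) (mu : {sigma_finite_measure set T -> \bar R})
  (P : probability T R) (HPmu : P `<< mu)
  (g : R) (Q0 Q1 : T -> A -> R)
  (hg0 : g != 0) (hg1 : g != -1)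
  (hQ0 : is_Qfun Q0) (hQ1 : is_Qfun Q1)
  (hint01 : P.-integrable setT (EFin \o Hint g Q0 Q1))
  (hint00 : P.-integrable setT (EFin \o Hint g Q0 Q0)) :
  0 <= Dgamma P g Q0 Q1 /\ (Dgamma P g Q0 Q1 = 0 <-> policy_equiv P Q0 Q1).
Proof.
have p0 : 1 + g != 0 by rewrite addrC addr_eq0.
case: hQ0 => _ h0; case: hQ1 => _ h1.
pose f x := g^-1 * (Hint g Q0 Q0 x - Hint g Q0 Q1 x).
have fge0 : forall x, 0 <= f x.
  by move=> x; exact: (@hint_point R A g (Q0 x) (Q1 x) hg0 hg1 (h0 x) (h1 x)).1.
have intB : P.-integrable setT (EFin \o (fun x => Hint g Q0 Q0 x - Hint g Q0 Q1 x)).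
  apply: eq_integrable (integrableB _ hint00 hint01) => //.
have intf : P.-integrable setT (EFin \o f).
  apply: eq_integrable (integrableZl _ g^-1 intB) => //.
have Df : Dgamma P g Q0 Q1 = Rintegral P setT f.
  have E1 : Rintegral P setT f =
      g^-1 * Rintegral P setT (fun x => Hint g Q0 Q0 x - Hint g Q0 Q1 x).
    exact: (RintegralZl g^-1 measurableT intB).
  have E2 : Rintegral P setT (fun x => Hint g Q0 Q0 x - Hint g Q0 Q1 x) =
      Rintegral P setT (Hint g Q0 Q0) - Rintegral P setT (Hint g Q0 Q1).
    exact: (RintegralB measurableT hint00 hint01).
  rewrite E1 E2 /Dgamma /Hgamma.
  exact: alg_aux.
rewrite Df; split.
  by apply: Rintegral_ge0 => x _; exact: fge0.
split.
- move=> I0.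
  have I0' : (\int[P]_(x in setT) (f x)%:E = 0)%E.
    have fin : (\int[P]_(x in setT) (f x)%:E)%E \is a fin_num :=
      integrable_fin_num measurableT intf.
    have := fineK fin; rewrite /Rintegral in I0; rewrite I0 => <-; reflexivity.
  have ae0 : ae_eq P setT (EFin \o f) (cst 0%E).
    apply/ae_eq_integral_abs => //; first exact: (measurable_int _ intf).
    rewrite -[RHS]I0'; apply: eq_integral => x _ /=.
    by rewrite ger0_norm.
  exists (fun x => expR (Lq R A g (Q1 x) - Lq R A g (Q0 x))); split.
    by move=> x; exact: expR_gt0.
  move: ae0; apply: filterS => x /(_ I) /= /eqP; rewrite eqe => /eqP fx0.
  have hH : Hint g Q0 Q1 x = Hint g Q0 Q0 x.
    move: fx0; rewrite /f => /eqP; rewrite mulf_eq0 invr_eq0 (negbTE hg0) /= subr_eq0.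
    by move=> /eqP ->.
  exact: (@hint_point R A g (Q0 x) (Q1 x) hg0 hg1 (h0 x) (h1 x)).2 hH.
- case=> eta [etap ae].
  have ae0 : ae_eq P setT (EFin \o f) (cst 0%E).
    move: ae; apply: filterS => x hx _ /=; congr EFin.
    have e : Hint g Q0 Q1 x = Hint g Q0 Q0 x :=
      @hint_conv R A g (Q0 x) (Q1 x) (eta x) p0 (h0 x) (etap x) hx.
    by rewrite /f e subrr mulr0.
  rewrite /Rintegral.
  rewrite (ae_eq_integral (cst 0%E) (EFin \o f) measurableT (measurable_int _ intf)
    (measurable_cst _) ae0).
  by rewrite integral0.
Qed.
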